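(* Consider any sequences $\{(x_k,y_k,\gamma_k)\}_{k\ge0}$, $\{(\tilde x_k,u_k,\tilde\gamma_k)\}_{k\ge1}$ generated by the inexact symmetric proximal ADMM described in the context, and set $p_k=B(y_k-y_{k-1})$, $q_k=-\beta(A\tilde x_k+By_k-b)$ for $k\ge1$. Then: (a) $\min\{2\vartheta\langle p_1,q_1\rangle,\ -\|y_1-y_0\|_H^2\}\ge-4d_0$; (b) for every $k\ge2$, $$2(1+\tau)\langle p_k,q_k\rangle\ge2(1-\theta)\langle p_k,q_{k-1}\rangle-2\tau\beta\|p_k\|^2+\|y_k-y_{k-1}\|_H^2-\|y_{k-1}-y_{k-2}\|_H^2.$$
   Context: Let $f:\mathbb{R}^n\to(-\infty,\infty]$ and $g:\mathbb{R}^p\to(-\infty,\infty]$ be proper closed convex functions, $A\in\mathbb{R}^{m\times n}$, $B\in\mathbb{R}^{m\times p}$, $b\in\mathbb{R}^m$ (problem: $\min\{f(x)+g(y):Ax+By=b\}$). Standing assumption: there exists $(x^*,y^*,\gamma^* )$ solving the Lagrangian system $0\in\partial f(x)-A^*\gamma$, $0\in\partial g(y)-B^*\gamma$, $0=Ax+By-b$. Here $\partial$ is the subdifferential, $A^*$ the transpose, $\mathbb{S}^n_{++}$ ($\mathbb{S}^p_+$) the symmetric positive definite (semidefinite) matrices, and $\|z\|_Q=\sqrt{\langle Qz,z\rangle}$ for $Q$ positive semidefinite. Algorithm (inexact symmetric proximal ADMM): given $(x_0,y_0,\gamma_0)\in\mathbb{R}^n\times\mathbb{R}^p\times\mathbb{R}^m$,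 $\beta>0$, $\tilde\sigma,\hat\sigma\in[0,1)$, $G\in\mathbb{S}^n_{++}$, $H\in\mathbb{S}^p_+$, and $(\tau,\theta)\in\mathcal R_{\tilde\sigma}:=\{(\tau,\theta):\tau\in(-1,1-\tilde\sigma),\ \tau+\theta>0,\ (1-\tau^2)(2-\tau-\theta-\tilde\sigma)-(1-\theta)^2(1-\tau-\tilde\sigma)>0\}$. For $k=1,2,\dots$: compute $(\tilde x_k,u_k)$ with $u_k\in\partial f(\tilde x_k)-A^*\tilde\gamma_k$ and $\|\tilde x_k-x_{k-1}+G^{-1}u_k\|_G^2\le\frac{\tilde\sigma}{\beta}\|\tilde\gamma_k-\gamma_{k-1}\|^2+\hat\sigma\|\tilde x_k-x_{k-1}\|_G^2$, where $\tilde\gamma_k=\gamma_{k-1}-\beta(A\tilde x_k+By_{k-1}-b)$; set $\gamma_{k-1/2}=\gamma_{k-1}-\tau\beta(A\tilde x_k+By_{k-1}-b)$; let $y_k$ be an optimal solution of $\min_y\{g(y)-\langle\gamma_{k-1/2},By\rangle+\frac\beta2\|A\tilde x_k+By-b\|^2+\frac12\|y-y_{k-1}\|_H^2\}$; set $x_k=x_{k-1}-G^{-1}u_k$ and $\gamma_k=\gamma_{k-1/2}-\theta\beta(A\tilde x_k+By_k-b)$. Definitions: $T(x,y,\gamma)=(\partial f(x)-A^*\gamma,\ \partial g(y)-B^*\gamma,\ Ax+By-b)$; $M=\begin{bmatrix}G&0&0\\0&H+\frac{(\tau-\tau\theta+\theta)\beta}{\tau+\theta}B^*B&-\frac{\tau}{\tau+\theta}B^*\\0&-\frac{\tau}{\tau+\theta}B&\frac{1}{(\tau+\theta)\beta}I\end{bmatrix}$;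 $z_0=(x_0,y_0,\gamma_0)$; $d_0=\inf\{\|z^*-z_0\|_M^2: z^*\in T^{-1}(0)\}$; $\vartheta=\sqrt{(3-3\tau-2\tilde\sigma)(4-\tau-\theta-2\tilde\sigma)}-2(1-\tau-\tilde\sigma)$. *)

(* Defs.v *)
From HB Require Import structures.
From mathcomp Require Import all_boot all_order all_algebra.
From mathcomp Require Import all_classical all_reals all_analysis.
Set Implicit Arguments. Unset Strict Implicit. Unset Printing Implicit Defensive.
Import Order.TTheory GRing.Theory Num.Theory.
Import numFieldNormedType.Exports.
Local Open Scope ring_scope.
Local Open Scope classical_set_scope.

Section ADMMDefs.
Variable R : realType.

Definition dotv (n : nat) (u v : 'cV[R]_n) : R := \sum_(i < n) u i 0 * v i 0.

Definition qnorm2 (n : nat) (Q : 'M[R]_n) (z : 'cV[R]_n) : R := dotv (Q *m z) z.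

Definition norm2 (n : nat) (z : 'cV[R]_n) : R := dotv z z.

Definition symmetric (n : nat) (Q : 'M[R]_n) : Prop := Q^T = Q.

Definition posdef (n : nat) (Q : 'M[R]_n) : Prop :=
  symmetric Q /\ forall z : 'cV[R]_n, z != 0 -> 0 < qnorm2 Q z.

Definition possemidef (n : nat) (Q : 'M[R]_n) : Prop :=
  symmetric Q /\ forall z : 'cV[R]_n, 0 <= qnorm2 Q z.

Definition proper_fun (n : nat) (f : 'cV[R]_n -> \bar R) : Prop :=
  (forall x, f x != -oo%E) /\ (exists x, f x < +oo)%E.

Definition convex_ext (n : nat) (f : 'cV[R]_n -> \bar R) : Prop :=
  forall (x y : 'cV[R]_n) (t : R), 0 < t < 1 ->
    (f ((t *: x + (1 - t) *: y)%R) <= t%:E * f x + (1 - t)%:E * f y)%E.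

Definition closed_fun (n : nat) (f : 'cV[R]_n -> \bar R) : Prop :=
  lower_semicontinuous f.

Definition proper_closed_convex (n : nat) (f : 'cV[R]_n -> \bar R) : Prop :=
  [/\ proper_fun f, closed_fun f & convex_ext f].

Definition subdiff (n : nat) (f : 'cV[R]_n -> \bar R) (x : 'cV[R]_n) : set 'cV[R]_n :=
  [set v | f x \is a fin_num /\
           forall z, (f x + (dotv v (z - x)%R)%:E <= f z)%E].

Definition lagr_sol (n p m : nat) (f : 'cV[R]_n -> \bar R) (g : 'cV[R]_p -> \bar R)
  (A : 'M[R]_(m, n)) (B : 'M[R]_(m, p)) (b : 'cV[R]_m)
  (x : 'cV[R]_n) (y : 'cV[R]_p) (gam : 'cV[R]_m) : Prop :=
  [/\ subdiff f x (A^T *m gam), subdiff g y (B^T *m gam) & A *m x + B *m y - b = 0].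

Definition in_region (sig tau theta : R) : Prop :=
  [/\ -1 < tau < 1 - sig, 0 < tau + theta &
      0 < (1 - tau ^+ 2) * (2 - tau - theta - sig)
          - (1 - theta) ^+ 2 * (1 - tau - sig)].

Definition Mmat (n p m : nat) (G : 'M[R]_n) (H : 'M[R]_p) (B : 'M[R]_(m, p))
  (beta tau theta : R) : 'M[R]_(n + p + m) :=
  block_mx
    (block_mx G 0 0 (H + ((tau - tau * theta + theta) * beta / (tau + theta)) *: (B^T *m B)))
    (col_mx (0 : 'M[R]_(n, m)) (- (tau / (tau + theta)) *: B^T))
    (row_mx (0 : 'M[R]_(m, n)) (- (tau / (tau + theta)) *: B))
    ((1 / ((tau + theta) * beta)) *: 1%:M).

Definition stack3 (n p m : nat) (x : 'cV[R]_n) (y : 'cV[R]_p) (gam : 'cV[R]_m)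
  : 'cV[R]_(n + p + m) := col_mx (col_mx x y) gam.

Definition d0 (n p m : nat) (f : 'cV[R]_n -> \bar R) (g : 'cV[R]_p -> \bar R)
  (A : 'M[R]_(m, n)) (B : 'M[R]_(m, p)) (b : 'cV[R]_m)
  (G : 'M[R]_n) (H : 'M[R]_p) (beta tau theta : R)
  (x0 : 'cV[R]_n) (y0 : 'cV[R]_p) (gam0 : 'cV[R]_m) : \bar R :=
  ereal_inf [set r : \bar R | exists (xs : 'cV[R]_n) (ys : 'cV[R]_p) (gs : 'cV[R]_m),
      lagr_sol f g A B b xs ys gs /\
      r = (qnorm2 (Mmat G H B beta tau theta)
             (stack3 xs ys gs - stack3 x0 y0 gam0))%:E].

Definition vartheta (sig tau theta : R) : R :=
  Num.sqrt ((3 - 3 * tau - 2 * sig) * (4 - tau - theta - 2 * sig))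
  - 2 * (1 - tau - sig).

Definition admm_iter (n p m : nat) (f : 'cV[R]_n -> \bar R) (g : 'cV[R]_p -> \bar R)
  (A : 'M[R]_(m, n)) (B : 'M[R]_(m, p)) (b : 'cV[R]_m)
  (beta sigt sigh tau theta : R) (G : 'M[R]_n) (H : 'M[R]_p)
  (x : nat -> 'cV[R]_n) (y : nat -> 'cV[R]_p) (gam : nat -> 'cV[R]_m)
  (xt : nat -> 'cV[R]_n) (u : nat -> 'cV[R]_n) (gt : nat -> 'cV[R]_m) : Prop :=
  forall k : nat, (1 <= k)%N ->
    let gh := gam k.-1 - (tau * beta) *: (A *m xt k + B *m y k.-1 - b) in
    [/\ gt k = gam k.-1 - beta *: (A *m xt k + B *m y k.-1 - b),
        (* u_k in \partial f(xt_k) - A^* gt_k *)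
        subdiff f (xt k) (u k + A^T *m gt k),
        qnorm2 G (xt k - x k.-1 + invmx G *m u k)
          <= sigt / beta * norm2 (gt k - gam k.-1) + sigh * qnorm2 G (xt k - x k.-1) &
        [/\
        (forall yy : 'cV[R]_p,
           (g (y k) + (- dotv gh (B *m y k)
                       + beta / 2 * norm2 (A *m xt k + B *m y k - b)
                       + 1 / 2 * qnorm2 H (y k - y k.-1))%:E
            <= g yy + (- dotv gh (B *m yy)
                       + beta / 2 * norm2 (A *m xt k + B *m yy - b)
                       + 1 / 2 * qnorm2 H (yy - y k.-1))%:E)%E),
        x k = x k.-1 - invmx G *m u k &
        gam k = gh - (theta * beta) *: (A *m xt k + B *m y k - b)]].

End ADMMDefs.

(* Main.v *)
Require Import Defs.
From HB Require Import structures.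
From mathcomp Require Import all_boot all_order all_algebra.
From mathcomp Require Import all_classical all_reals all_analysis.
From mathcomp Require Import ring lra.
Import Order.TTheory GRing.Theory Num.Theory.
Local Open Scope ring_scope.


Section Dot.
Set Implicit Arguments.
Unset Strict Implicit.
Variable R : realType.
Implicit Types (n : nat).

Lemma dotvC n (u v : 'cV[R]_n) : dotv u v = dotv v u.
Proof. by rewrite /dotv; apply: eq_bigr => i _; rewrite mulrC. Qed.

Lemma dotvDl n (u v w : 'cV[R]_n) : dotv (u + v) w = dotv u w + dotv v w.
Proof. by rewrite /dotv -big_split; apply: eq_bigr => i _; rewrite mxE mulrDl. Qed.

Lemma dotvDr n (u v w : 'cV[R]_n) : dotv w (u + v) = dotv w u + dotv w v.
Proof. by rewrite dotvC dotvDl !(dotvC w). Qed.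

Lemma dotvZl n a (u w : 'cV[R]_n) : dotv (a *: u) w = a * dotv u w.
Proof. by rewrite /dotv mulr_sumr; apply: eq_bigr => i _; rewrite mxE mulrA. Qed.

Lemma dotvZr n a (u w : 'cV[R]_n) : dotv w (a *: u) = a * dotv w u.
Proof. by rewrite dotvC dotvZl dotvC. Qed.

Lemma dotvNl n (u w : 'cV[R]_n) : dotv (- u) w = - dotv u w.
Proof. by rewrite -scaleN1r dotvZl mulN1r. Qed.

Lemma dotvNr n (u w : 'cV[R]_n) : dotv w (- u) = - dotv w u.
Proof. by rewrite dotvC dotvNl dotvC. Qed.

Lemma dotv0l n (w : 'cV[R]_n) : dotv 0 w = 0.
Proof. by rewrite -(scale0r (0 : 'cV[R]_n)) dotvZl mul0r. Qed.

Lemma dotvE n (u v : 'cV[R]_n) : dotv u v = (u^T *m v) 0 0.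
Proof. by rewrite /dotv mxE; apply: eq_bigr => i _; rewrite mxE. Qed.

Lemma dotv_mull n k (M : 'M[R]_(k, n)) (u : 'cV[R]_n) (v : 'cV[R]_k) :
  dotv (M *m u) v = dotv u (M^T *m v).
Proof. by rewrite !dotvE trmx_mul mulmxA. Qed.

Lemma dotv_sym n (Q : 'M[R]_n) (u v : 'cV[R]_n) : Defs.symmetric Q ->
  dotv (Q *m u) v = dotv (Q *m v) u.
Proof. by move=> hQ; rewrite dotv_mull hQ dotvC. Qed.

Lemma dotv_col n1 n2 (a c : 'cV[R]_n1) (b d : 'cV[R]_n2) :
  dotv (col_mx a b) (col_mx c d) = dotv a c + dotv b d.
Proof.
rewrite /dotv big_split_ord /=; congr (_ + _); apply: eq_bigr => i _.
  by rewrite !col_mxEu.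
by rewrite !col_mxEd.
Qed.

Lemma norm2_ge0 n (u : 'cV[R]_n) : 0 <= norm2 u.
Proof. by rewrite /norm2 /dotv sumr_ge0 // => i _; rewrite -expr2 sqr_ge0. Qed.

Lemma qnorm2_Mmat n p m (G : 'M[R]_n) (H : 'M[R]_p) (B : 'M[R]_(m, p))
  (beta tau theta : R) (dx : 'cV[R]_n) (dy : 'cV[R]_p) (dg : 'cV[R]_m) :
  qnorm2 (Mmat G H B beta tau theta) (stack3 dx dy dg) =
  qnorm2 G dx + qnorm2 H dy
  + (tau - tau * theta + theta) * beta / (tau + theta) * norm2 (B *m dy)
  - 2 * (tau / (tau + theta)) * dotv (B *m dy) dg
  + 1 / ((tau + theta) * beta) * norm2 dg.
Proof.
rewrite /qnorm2 /Mmat /stack3 !mul_block_col !mul_row_col !mul_col_mx.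
rewrite add_col_mx !dotv_col mulmxDl ?mul0mx ?mulmx0 ?add0r ?addr0 !dotvDl.
rewrite -!scalemxAl !dotvZl mul1mx -mulmxA (dotv_mull B) (dotv_mull B^T) trmxK (dotvC dy) /norm2.
ring.

Qed.

Lemma unit_posdef n (G : 'M[R]_n) : posdef G -> G \in unitmx.
Proof.
case=> hs hp; rewrite -row_free_unit -kermx_eq0; apply/negPn/negP => hK.
have [i hi] : exists i, row i (kermx G) != 0.
  apply/existsP; move: hK; apply: contraR; rewrite negb_exists => /forallP h.
  apply/eqP/row_matrixP => i; rewrite row0; exact/eqP/negPn/h.
set z := (row i (kermx G))^T.
have hz : z != 0 by rewrite /z trmx_eq0.
have hGz : G *m z = 0.
  by rewrite /z -{1}hs -trmx_mul -row_mul mulmx_ker row0 trmx0.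
by move: (hp z hz); rewrite /qnorm2 hGz dotv0l ltxx.
Qed.

End Dot.

Lemma stack3B (R : realType) n p m (a a' : 'cV[R]_n) (b b' : 'cV[R]_p) (c c' : 'cV[R]_m) :
  stack3 a b c - stack3 a' b' c' = stack3 (a - a') (b - b') (c - c').
Proof. by rewrite /stack3 !opp_col_mx !add_col_mx. Qed.


Section Sub.
Set Implicit Arguments.
Unset Strict Implicit.
Variable R : realType.

Lemma limit_t (X Y K : R) : (forall t : R, 0 < t < 1 -> X <= Y + t * K) -> X <= Y.
Proof.
move=> h; apply/ler_addgt0Pr => e he.
set K' := `|K| + 1.
have hK' : 0 < K' by rewrite /K' ltr_wpDl.
set t := Num.min (1/2) (e / K').
have ht0 : 0 < t by rewrite /t lt_min; apply/andP; split; [lra | exact: divr_gt0].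
have ht1 : t < 1 by rewrite /t gt_min; apply/orP; left; lra.
have htK : t * K <= e.
  apply: (le_trans (y := t * K')).
    rewrite ler_pM2l // /K'; have := ler_norm K; lra.
  have : t <= e / K' by rewrite /t ge_min lexx orbT.
  by rewrite ler_pdivlMr.
have := h t; rewrite ht0 ht1 => /(_ isT); lra.
Qed.

Lemma lee_lin (a b c d e : R) : (a%:E <= b%:E * c%:E + d%:E * e%:E)%E -> a <= b*c + d*e.
Proof. by rewrite -!EFinM -EFinD lee_fin. Qed.

Lemma lee_pinf (b c d e : R) : (+oo <= b%:E * c%:E + d%:E * e%:E)%E -> False.
Proof. by rewrite -!EFinM -EFinD leye_eq. Qed.

Lemma subdiff_mono n (f : 'cV[R]_n -> \bar R) x1 x2 v1 v2 :
  subdiff f x1 v1 -> subdiff f x2 v2 -> 0 <= dotv (v1 - v2) (x1 - x2).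
Proof.
case=> /EFin_fin_numP [a ha] h1 [/EFin_fin_numP [b hb] h2].
move: (h1 x2) (h2 x1); rewrite ha hb -!EFinD !lee_fin.
rewrite dotvDl dotvNl -(opprB x1 x2) dotvNr; lra.
Qed.

Lemma min_subgrad p (g : 'cV[R]_p -> \bar R) (phi : 'cV[R]_p -> R) (K : 'cV[R]_p -> R)
  (y w : 'cV[R]_p) :
  proper_fun g -> convex_ext g ->
  (forall z, (g y + (phi y)%:E <= g z + (phi z)%:E)%E) ->
  (forall (d : 'cV[R]_p) (t : R), phi (y + t *: d) = phi y - t * dotv w d + t ^+ 2 * K d) ->
  subdiff g y w.
Proof.
move=> [hninf [x0 hx0]] hconv hmin hphi.
have hgy : g y \is a fin_num.
  apply/fin_numP; split; first exact: hninf.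
  apply: contraTneq (hmin x0) => ->.
  rewrite addye // -ltNge; move: hx0 (hninf x0).
  by case: (g x0) => [r| |] //= _ _; rewrite -EFinD ltry.
move/EFin_fin_numP: (hgy) => [gy hgye].
split=> // z.
case hz: (g z) => [gz| |]; last by move: (hninf z); rewrite hz.
  2: by rewrite leey.
rewrite hgye -EFinD lee_fin.
have key : forall t : R, 0 < t < 1 -> gy + dotv w (z - y) <= gz + t * K (z - y).
  move=> t /andP [t0 t1].
  have hc := hconv z y t; rewrite t0 t1 /= in hc; move/(_ isT): hc.
  have hm := hmin (y + t *: (z - y)).
  have -> : t *: z + (1 - t) *: y = y + t *: (z - y).
    by apply/matrixP => i j; rewrite !mxE; ring.
  rewrite hphi hz hgye in hm *.
  case: (g (y + t *: (z - y))) hm => [gt| |] //=.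
  - move=> hm hc; move: hm; rewrite -!EFinD lee_fin => hm. move/lee_lin: hc => hc.
    have : t * (gy + dotv w (z - y)) <= t * (gz + t * K (z - y)) by nra.
    by rewrite ler_pM2l.
apply: (@limit_t _ _ (K (z - y))) => t ht.
exact: key.
Qed.

End Sub.


Section Sub2.
Set Implicit Arguments.
Unset Strict Implicit.
Variable R : realType.

Lemma ysub_subgrad p m (g : 'cV[R]_p -> \bar R) (B : 'M[R]_(m,p)) (H : 'M[R]_p)
  (X b gh : 'cV[R]_m) (y y' : 'cV[R]_p) (beta : R) :
  proper_fun g -> convex_ext g -> Defs.symmetric H ->
  (forall yy, (g y + (- dotv gh (B *m y) + beta / 2 * norm2 (X + B *m y - b)
                       + 1 / 2 * qnorm2 H (y - y'))%:E
            <= g yy + (- dotv gh (B *m yy) + beta / 2 * norm2 (X + B *m yy - b)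
                       + 1 / 2 * qnorm2 H (yy - y'))%:E)%E) ->
  subdiff g y (B^T *m gh - beta *: (B^T *m (X + B *m y - b)) - H *m (y - y')).
Proof.
move=> hp hc hH hmin.
apply: (min_subgrad (K := fun d => beta / 2 * norm2 (B *m d) + 1 / 2 * qnorm2 H d)
   hp hc hmin) => d t.
rewrite /norm2 /qnorm2 !(mulmxDr, mulmxBr, mulmxN) -!scalemxAr.
rewrite !(dotvDl, dotvDr, dotvNl, dotvNr, dotvZl, dotvZr).
rewrite !(dotv_mull B^T) !trmxK.
rewrite (dotvC (B *m d) X) (dotvC (B *m d) (B *m y)) (dotvC (B *m d) b).
rewrite (dotv_sym d y hH) (dotv_sym d y' hH).
set a1 := dotv gh (B *m d). set a2 := dotv X (B *m d). set a3 := dotv (B *m y) (B *m d).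
set a4 := dotv (B *m d) (B *m d). set a5 := dotv b (B *m d). set a6 := dotv (H *m d) d.
set a7 := dotv (H *m y') d. set a8 := dotv (H *m y) d.
by field.
Qed.
End Sub2.


Ltac expand := rewrite /norm2 /qnorm2 ?(mulmxDr, mulmxBr, mulmxN, mulNmx, mulmxDl, mulmxBl, scalerN, scaleNr) -?scalemxAr ?(dotvDl, dotvDr, dotvNl, dotvNr, dotvZl, dotvZr).

Section Q.
Set Implicit Arguments.
Unset Strict Implicit.
Variable R : realType.

Lemma key_region (s tau th : R) :
  0 <= s -> s < 1 -> -1 < tau -> tau < 1 - s -> 0 < tau + th ->
  0 < (1 - tau ^+ 2) * (2 - tau - th - s) - (1 - th) ^+ 2 * (1 - tau - s) ->
  [/\ 0 < 3 - 3 * tau - 2 * s, 0 < 4 - tau - th - 2 * s &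
  4 * (1 - tau - s)^+2 <= (3 - 3 * tau - 2 * s) * (4 - tau - th - 2 * s)].
Proof.
move=> h1 h2 h3 h4 h5 h6.
have ht : 0 < 1 - tau - s by lra.
have h1t : 0 < 1 - tau ^+ 2 by nra.
have hD : 0 < 2 - tau - th - s.
  rewrite ltNge; apply/negP => hD.
  have : (1 - tau ^+ 2) * (2 - tau - th - s) <= 0 by rewrite pmulr_rle0.
  have : 0 <= (1 - th) ^+ 2 * (1 - tau - s) by rewrite mulr_ge0 ?sqr_ge0 ?ltW.
  lra.
have hw : 0 < 3 * (1 - th) + 5 + tau - 2 * s.
  have [hw0|hw0] := lerP 0 (1 - th); first lra.
  have hw2 : (1 - th)^+2 < 1 - tau ^+ 2.
    have : (1 - th) ^+ 2 * (1 - tau - s) < (1 - tau ^+ 2) * (1 - tau - s) by nra.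
    by rewrite ltr_pM2r.
  nra.
split; [lra | lra | nra].
Qed.

Lemma quad_id m (P Q : 'cV[R]_m) (x y z beta : R) : beta != 0 -> x != 0 ->
  x * beta * norm2 P + y * dotv P Q + z / beta * norm2 Q =
  1 / (x * beta) * norm2 ((x * beta) *: P + (y / 2) *: Q)
  + (4 * x * z - y ^+ 2) / (4 * x * beta) * norm2 Q.
Proof.
move=> hb hx; expand; rewrite (dotvC Q P); field.
by rewrite hb hx.
Qed.

Lemma qpq_nonneg m (P Q : 'cV[R]_m) (beta sig tau th : R) :
  0 < beta -> 0 <= sig < 1 -> in_region sig tau th ->
  0 <= (3 - 3 * tau - 2 * sig) * beta * norm2 P + 4 * (1 - tau - sig) * dotv P Q
       + (4 - tau - th - 2 * sig) / beta * norm2 Q.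
Proof.
move=> hb /andP [hs0 hs1] [/andP [ht1 ht2] hs hr].
have [ha hc hk] := key_region hs0 hs1 ht1 ht2 hs hr.
rewrite quad_id ?gt_eqF //.
apply: addr_ge0; apply: mulr_ge0; rewrite ?norm2_ge0 //.
  by rewrite divr_ge0 // ltW // mulr_gt0.
apply: divr_ge0; first lra.
by rewrite ltW // !mulr_gt0.
Qed.

Lemma qpq_vt m (P Q : 'cV[R]_m) (beta sig tau th : R) :
  0 < beta -> 0 <= sig < 1 -> in_region sig tau th ->
  0 <= (3 - 3 * tau - 2 * sig) * beta * norm2 P + 4 * (1 - tau - sig) * dotv P Q
       + (4 - tau - th - 2 * sig) / beta * norm2 Q
       + 2 * vartheta sig tau th * dotv P Q.
Proof.
move=> hb /andP [hs0 hs1] [/andP [ht1 ht2] hs hr].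
have [ha hc hk] := key_region hs0 hs1 ht1 ht2 hs hr.
rewrite /vartheta (sqrtrM _ (ltW ha)).
have ea := sqr_sqrtr (ltW ha); have ec := sqr_sqrtr (ltW hc).
move: (Num.sqrt (3 - 3 * tau - 2 * sig)) (Num.sqrt (4 - tau - th - 2 * sig)) ea ec => sa sc ea ec.
rewrite -{1}ea -{1}ec.
have -> : sa ^+ 2 * beta * norm2 P + 4 * (1 - tau - sig) * dotv P Q
   + sc ^+ 2 / beta * norm2 Q + 2 * (sa * sc - 2 * (1 - tau - sig)) * dotv P Q
   = 1 / beta * norm2 ((sa * beta) *: P + sc *: Q).
  expand; rewrite (dotvC Q P); field; by rewrite gt_eqF.
by apply: mulr_ge0; rewrite ?norm2_ge0 // divr_ge0 // ltW.
Qed.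

End Q.

Section E.
Variable R : realType.
Local Open Scope ereal_scope.
Lemma fin_step (mn d : R) : (- mn / 4 <= d)%R -> - 4%:E * d%:E <= mn%:E.
Proof. move=> h; rewrite -EFinN -EFinM lee_fin; lra. Qed.
Lemma inf_step (mn : R) : - 4%:E * +oo <= mn%:E.
Proof. by rewrite -EFinN muleC lt0_mulye ?lte_fin // leNye. Qed.
End E.



Theorem lemma2p8 (R : realType) (n p m : nat)
  (f : 'cV[R]_n -> \bar R) (g : 'cV[R]_p -> \bar R)
  (A : 'M[R]_(m, n)) (B : 'M[R]_(m, p)) (b : 'cV[R]_m)
  (beta sigt sigh tau theta : R) (G : 'M[R]_n) (H : 'M[R]_p)
  (x : nat -> 'cV[R]_n) (y : nat -> 'cV[R]_p) (gam : nat -> 'cV[R]_m)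
  (xt : nat -> 'cV[R]_n) (u : nat -> 'cV[R]_n) (gt : nat -> 'cV[R]_m) :
  proper_closed_convex f -> proper_closed_convex g ->
  (exists xs ys gs, lagr_sol f g A B b xs ys gs) ->
  0 < beta -> 0 <= sigt < 1 -> 0 <= sigh < 1 ->
  posdef G -> possemidef H -> in_region sigt tau theta ->
  admm_iter f g A B b beta sigt sigh tau theta G H x y gam xt u gt ->
  let pk := fun k => B *m (y k - y k.-1) in
  let qk := fun k => - beta *: (A *m xt k + B *m y k - b) in
  ((Num.min (2 * vartheta sigt tau theta * dotv (pk 1%N) (qk 1%N))
            (- qnorm2 H (y 1%N - y 0%N)))%:E
     >= - 4%:E * d0 f g A B b G H beta tau theta (x 0%N) (y 0%N) (gam 0%N))%E
  /\
  (forall k : nat, (2 <= k)%N ->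
     2 * (1 + tau) * dotv (pk k) (qk k)
       >= 2 * (1 - theta) * dotv (pk k) (qk k.-1) - 2 * tau * beta * norm2 (pk k)
          + qnorm2 H (y k - y k.-1) - qnorm2 H (y k.-1 - y k.-2)).
Proof.
move=> [hfp _ hfc] [hgp _ hgc] hsolex hbeta hsig hsih hG [hHs hHp] hreg hiter pk qk.
split; last first.
  case=> [|[|j]] // _.
  have [_ _ _ [hm2 _ hg2]] := hiter j.+2 isT.
  have [_ _ _ [hm1 _ hg1]] := hiter j.+1 isT.
  have s2 := ysub_subgrad hgp hgc hHs hm2.
  have s1 := ysub_subgrad hgp hgc hHs hm1.
  have hmono := subdiff_mono s2 s1.
  have hq := hHp ((y j.+2 - y j.+1) - (y j.+1 - y j)).
  have hsum := addr_ge0 (mulr_ge0 (ler0n _ 2) hmono) hq.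
  rewrite -subr_ge0; apply: (le_trans hsum); rewrite le_eqVlt; apply/orP; left; apply/eqP.
  rewrite /pk /qk /= {pk qk} hg1 [j.+1.-1]/=.
  expand. rewrite ?(dotv_mull B^T) ?trmxK. expand.
  rewrite ?(dotvC (A *m xt j.+1) (gam j)).
  rewrite ?(dotvC (A *m xt j.+2) (gam j)).
  rewrite ?(dotvC (B *m y j) (gam j)).
  rewrite ?(dotvC (B *m y j.+1) (gam j)).
  rewrite ?(dotvC (B *m y j.+2) (gam j)).
  rewrite ?(dotvC (b) (gam j)).
  rewrite ?(dotvC (A *m xt j.+2) (A *m xt j.+1)).
  rewrite ?(dotvC (B *m y j) (A *m xt j.+1)).
  rewrite ?(dotvC (B *m y j.+1) (A *m xt j.+1)).
  rewrite ?(dotvC (B *m y j.+2) (A *m xt j.+1)).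
  rewrite ?(dotvC (b) (A *m xt j.+1)).
  rewrite ?(dotvC (B *m y j) (A *m xt j.+2)).
  rewrite ?(dotvC (B *m y j.+1) (A *m xt j.+2)).
  rewrite ?(dotvC (B *m y j.+2) (A *m xt j.+2)).
  rewrite ?(dotvC (b) (A *m xt j.+2)).
  rewrite ?(dotvC (B *m y j.+1) (B *m y j)).
  rewrite ?(dotvC (B *m y j.+2) (B *m y j)).
  rewrite ?(dotvC (b) (B *m y j)).
  rewrite ?(dotvC (B *m y j.+2) (B *m y j.+1)).
  rewrite ?(dotvC (b) (B *m y j.+1)).
  rewrite ?(dotvC (b) (B *m y j.+2)).
  rewrite ?(dotv_sym (y j.+1) (y j) hHs).
  rewrite ?(dotv_sym (y j.+2) (y j) hHs).
  rewrite ?(dotv_sym (y j.+2) (y j.+1) hHs).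
  ring.
have hGp : forall z, 0 <= qnorm2 G z.
  move=> z; case: (eqVneq z 0) => [->|hz]; first by rewrite /qnorm2 mulmx0 dotv0l.
  exact/ltW/(hG.2 z hz).
have hGs := hG.1.
have hU := unit_posdef hG.
have [h1 h2 h3 [h4 _ _]] := hiter 1%N isT.
change (1.-1)%N with 0%N in h1, h2, h3, h4.
set mn := Num.min _ _.
have key : forall xs ys gs, lagr_sol f g A B b xs ys gs ->
   - mn <= 4 * qnorm2 (Mmat G H B beta tau theta)
                 (stack3 xs ys gs - stack3 (x 0%N) (y 0%N) (gam 0%N)).
  move=> xs ys gs [hfs hgs hb0].
  have hb : b = A *m xs + B *m ys by apply/esym/eqP; rewrite -subr_eq0 hb0.
  have hFm := subdiff_mono h2 hfs.
  have hGm := subdiff_mono (ysub_subgrad hgp hgc hHs h4) hgs.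
  have hX : 0 <= sigt / beta * norm2 (gt 1%N - gam 0%N) + sigh * qnorm2 G (xt 1%N - x 0%N)
                 - qnorm2 G (xt 1%N - x 0%N + invmx G *m u 1%N) by rewrite subr_ge0.
  rewrite -{1}(mulKVmx hU (u 1%N)) in hFm.
  move: hFm hX; rewrite h1; set v := invmx G *m u 1%N => hFm hX.
  have n1 := hGp ((x 0%N - xs) + (x 0%N - xs) - v).
  have n2 := hGp v.
  have hs1 : 0 <= 1 - sigh by case/andP: hsih => _ ?; lra.
  have n3 := mulr_ge0 hs1 (hGp (xt 1%N - x 0%N)).
  have n4 := hHp ((y 1%N - ys) + (y 1%N - ys) - (y 1%N - y 0%N)).
  have n5 := hHp (y 1%N - y 0%N).
  set E := B *m (y 1%N - ys).
  set pp := B *m (y 1%N - y 0%N).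
  have hst : 0 < tau + theta by case: hreg.
  have ht1 : 0 <= 1 - tau by case: hreg => /andP [_ ?] _ _; case/andP: hsig => ? _; lra.
  have n6 := mulr_ge0 (ltW (divr_gt0 ltr01 (mulr_gt0 hst hbeta)))
     (norm2_ge0 ((gam 0%N - gs) + ((gam 0%N - gs) + (tau + theta) *: qk 1%N + (tau * beta) *: pp)
                 - (tau * beta) *: (E + E - pp))).
  have n7 := mulr_ge0 (mulr_ge0 (ltW hbeta) ht1) (norm2_ge0 (E + E - pp)).
  have hS := addr_ge0 (addr_ge0 (addr_ge0 (addr_ge0 (addr_ge0 (addr_ge0 (addr_ge0 (addr_ge0 (addr_ge0
     (mulr_ge0 (ler0n _ 4) hFm) (mulr_ge0 (ler0n _ 4) hGm)) (mulr_ge0 (ler0n _ 2) hX))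
     n1) n2) (mulr_ge0 (ler0n _ 2) n3)) n4) (mulr_ge0 (ler0n _ 2) n5)) n6) n7.
  rewrite lerNl /mn le_min; apply/andP; split; rewrite -subr_ge0.
    have hQ := qpq_vt (pk 1%N) (qk 1%N) hbeta hsig hreg.
    apply: (le_trans (addr_ge0 (addr_ge0 hS n5) hQ)).
    rewrite le_eqVlt; apply/orP; left; apply/eqP.
    rewrite /mn /pk /qk /E /pp stack3B qnorm2_Mmat hb.
    change (1.-1)%N with 0%N.
    expand. rewrite ?(dotv_mull B^T) ?(dotv_mull A^T) ?trmxK. expand.
    rewrite ?(dotvC (gs) (gam 0%N)).
    rewrite ?(dotvC (A *m xt 1%N) (gam 0%N)).
    rewrite ?(dotvC (A *m xs) (gam 0%N)).
    rewrite ?(dotvC (B *m y 1%N) (gam 0%N)).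
    rewrite ?(dotvC (B *m y 0%N) (gam 0%N)).
    rewrite ?(dotvC (B *m ys) (gam 0%N)).
    rewrite ?(dotvC (A *m xt 1%N) (gs)).
    rewrite ?(dotvC (A *m xs) (gs)).
    rewrite ?(dotvC (B *m y 1%N) (gs)).
    rewrite ?(dotvC (B *m y 0%N) (gs)).
    rewrite ?(dotvC (B *m ys) (gs)).
    rewrite ?(dotvC (A *m xs) (A *m xt 1%N)).
    rewrite ?(dotvC (B *m y 1%N) (A *m xt 1%N)).
    rewrite ?(dotvC (B *m y 0%N) (A *m xt 1%N)).
    rewrite ?(dotvC (B *m ys) (A *m xt 1%N)).
    rewrite ?(dotvC (B *m y 1%N) (A *m xs)).
    rewrite ?(dotvC (B *m y 0%N) (A *m xs)).
    rewrite ?(dotvC (B *m ys) (A *m xs)).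
    rewrite ?(dotvC (B *m y 0%N) (B *m y 1%N)).
    rewrite ?(dotvC (B *m ys) (B *m y 1%N)).
    rewrite ?(dotvC (B *m ys) (B *m y 0%N)).
    rewrite ?(dotv_sym (y 0%N) (y 1%N) hHs).
    rewrite ?(dotv_sym (ys) (y 1%N) hHs).
    rewrite ?(dotv_sym (ys) (y 0%N) hHs).
    rewrite ?(dotv_sym (xs) (x 0%N) hGs).
    rewrite ?(dotv_sym (xt 1%N) (x 0%N) hGs).
    rewrite ?(dotv_sym (v) (x 0%N) hGs).
    rewrite ?(dotv_sym (xt 1%N) (xs) hGs).
    rewrite ?(dotv_sym (v) (xs) hGs).
    rewrite ?(dotv_sym (v) (xt 1%N) hGs).
    field.
    by rewrite ?(gt_eqF hbeta) ?(gt_eqF hst).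
  have hQ := qpq_nonneg (pk 1%N) (qk 1%N) hbeta hsig hreg.
  apply: (le_trans (addr_ge0 hS hQ)).
  rewrite le_eqVlt; apply/orP; left; apply/eqP.
    rewrite /mn /pk /qk /E /pp stack3B qnorm2_Mmat hb.
    change (1.-1)%N with 0%N.
    expand. rewrite ?(dotv_mull B^T) ?(dotv_mull A^T) ?trmxK. expand.
    rewrite ?(dotvC (gs) (gam 0%N)).
    rewrite ?(dotvC (A *m xt 1%N) (gam 0%N)).
    rewrite ?(dotvC (A *m xs) (gam 0%N)).
    rewrite ?(dotvC (B *m y 1%N) (gam 0%N)).
    rewrite ?(dotvC (B *m y 0%N) (gam 0%N)).
    rewrite ?(dotvC (B *m ys) (gam 0%N)).
    rewrite ?(dotvC (A *m xt 1%N) (gs)).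
    rewrite ?(dotvC (A *m xs) (gs)).
    rewrite ?(dotvC (B *m y 1%N) (gs)).
    rewrite ?(dotvC (B *m y 0%N) (gs)).
    rewrite ?(dotvC (B *m ys) (gs)).
    rewrite ?(dotvC (A *m xs) (A *m xt 1%N)).
    rewrite ?(dotvC (B *m y 1%N) (A *m xt 1%N)).
    rewrite ?(dotvC (B *m y 0%N) (A *m xt 1%N)).
    rewrite ?(dotvC (B *m ys) (A *m xt 1%N)).
    rewrite ?(dotvC (B *m y 1%N) (A *m xs)).
    rewrite ?(dotvC (B *m y 0%N) (A *m xs)).
    rewrite ?(dotvC (B *m ys) (A *m xs)).
    rewrite ?(dotvC (B *m y 0%N) (B *m y 1%N)).
    rewrite ?(dotvC (B *m ys) (B *m y 1%N)).
    rewrite ?(dotvC (B *m ys) (B *m y 0%N)).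
    rewrite ?(dotv_sym (y 0%N) (y 1%N) hHs).
    rewrite ?(dotv_sym (ys) (y 1%N) hHs).
    rewrite ?(dotv_sym (ys) (y 0%N) hHs).
    rewrite ?(dotv_sym (xs) (x 0%N) hGs).
    rewrite ?(dotv_sym (xt 1%N) (x 0%N) hGs).
    rewrite ?(dotv_sym (v) (x 0%N) hGs).
    rewrite ?(dotv_sym (xt 1%N) (xs) hGs).
    rewrite ?(dotv_sym (v) (xs) hGs).
    rewrite ?(dotv_sym (v) (xt 1%N) hGs).
    field.
    by rewrite ?(gt_eqF hbeta) ?(gt_eqF hst).
have hD : ((- mn / 4)%:E <= d0 f g A B b G H beta tau theta (x 0%N) (y 0%N) (gam 0%N))%E.
  apply/ereal_infP => r [xs [ys [gs [hs ->]]]].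
  rewrite lee_fin; have := key _ _ _ hs; lra.
move: hD; case: (d0 f g A B b G H beta tau theta (x 0%N) (y 0%N) (gam 0%N)) => [d| |] //.
  by rewrite lee_fin => hd; apply: fin_step.
by move=> _; apply: inf_step.
Qed.
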